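(* Let $H$ be a Hilbert space, $L:H\to[0,\infty)$ of class $C^2$, and $c:[0,\infty)\to[0,\infty)$ nonincreasing with $c(r)\le\inf\{|\nabla L(x)|/\sqrt{L(x)}:|x|\le r\}$ for all $r\ge0$ (convention $0/0=\infty$), and assume $c(r)>0$ for all $r>0$. If a solution $(x_t)_{t\ge0}$ of $\dot x(t)=-\nabla L(x(t))$ is bounded in $H$, then it converges in $H$ to a minimum of $L$, i.e. to some $x_\infty$ with $L(x_\infty)=0$. *)

(* Defs.v *)
From HB Require Import structures.
From mathcomp Require Import all_boot all_order all_algebra.
From mathcomp Require Import all_classical all_reals all_analysis.
Set Implicit Arguments. Unset Strict Implicit. Unset Printing Implicit Defensive.
Import Order.TTheory GRing.Theory Num.Theory.
Import numFieldNormedType.Exports.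
Local Open Scope ring_scope.

(* [ip] is a (real) inner product on V inducing the norm of V.
   Together with completeness of V this makes V a real Hilbert space. *)
Definition is_inner_product (R : realType) (V : normedModType R)
  (ip : V -> V -> R) : Prop :=
  [/\ (forall x y, ip x y = ip y x),
      (forall a x y z, ip (a *: x + y) z = a * ip x z + ip y z),
      (forall x, 0 <= ip x x) &
      (forall x, `|x| = Num.sqrt (ip x x))].

Definition is_gradient (R : realType) (V : normedModType R)
  (ip : V -> V -> R) (L : V -> R) (g : V -> V) : Prop :=
  forall x, differentiable L x /\ forall v, 'd L x v = ip (g x) v.

Definition C1_map (R : realType) (V : normedModType R) (f : V -> V) : Prop :=
  (forall x, differentiable f x) /\
  (forall x (e : R), 0 < e -> exists2 d : R, 0 < d &
     forall y, `|y - x| < d -> forall v, `|'d f y v - 'd f x v| <= e * `|v|).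

(* Main.v *)
Require Import Defs.
From HB Require Import structures.
From mathcomp Require Import all_boot all_order all_algebra.
From mathcomp Require Import all_classical all_reals all_analysis.
From mathcomp Require Import ring lra.
Import Order.TTheory GRing.Theory Num.Theory.
Import numFieldNormedType.Exports.
Local Open Scope classical_set_scope.
Local Open Scope ring_scope.

Section IP.
Context (R : realType) (H : normedModType R) (ip : H -> H -> R).

Lemma ipD1 (hip : is_inner_product ip) x y z : ip (x + y) z = ip x z + ip y z.
Proof. by case: hip => _ hl _ _; rewrite -{1}(scale1r x) hl mul1r. Qed.

Lemma ip0l (hip : is_inner_product ip) z : ip 0 z = 0.
Proof.
have := ipD1 hip 0 0 z; rewrite addr0 => h; lra.
Qed.

Lemma ipZ1 (hip : is_inner_product ip) a x z : ip (a *: x) z = a * ip x z.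
Proof. by case: (hip) => _ hl _ _; rewrite -[a *: x]addr0 hl ip0l // addr0. Qed.

Lemma ipN1 (hip : is_inner_product ip) x z : ip (- x) z = - ip x z.
Proof. by rewrite -scaleN1r ipZ1 // mulN1r. Qed.

Lemma ipB1 (hip : is_inner_product ip) x y z : ip (x - y) z = ip x z - ip y z.
Proof. by rewrite ipD1 // ipN1. Qed.

Lemma ipD2 (hip : is_inner_product ip) x y z : ip z (x + y) = ip z x + ip z y.
Proof. by case: (hip) => hs _ _ _; rewrite hs ipD1 // !(hs z). Qed.

Lemma ipxx (hip : is_inner_product ip) x : ip x x = `|x| ^+ 2.
Proof. by case: (hip) => _ _ hp hn; rewrite hn sqr_sqrtr. Qed.

Lemma ip_le (hip : is_inner_product ip) x y : ip x y <= `|x| * `|y|.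
Proof.
have e : `|x + y| ^+ 2 = `|x| ^+ 2 + 2 * ip x y + `|y| ^+ 2.
  rewrite -!ipxx // ipD1 // !ipD2 //.
  by case: (hip) => hs _ _ _; rewrite (hs y x); ring.
have h1 : `|x + y| ^+ 2 <= (`|x| + `|y|) ^+ 2.
  by rewrite lerXn2r ?nnegrE ?addr_ge0 // ler_normD.
move: h1; rewrite e => h1; nra.
Qed.

Lemma ip_abs (hip : is_inner_product ip) x y : `|ip x y| <= `|x| * `|y|.
Proof.
rewrite ler_norml ip_le // andbT lerNl -ipN1 //.
by apply: le_trans (ip_le hip _ _) _; rewrite normrN.
Qed.

Lemma ip_cont (hip : is_inner_product ip) u : continuous (fun v => ip v u).
Proof.
move=> v; apply/cvgrPdist_lt => e e0.
have d0 : 0 < e / (`|u| + 1) by rewrite divr_gt0 // ltr_wpDl.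
near=> w.
have hw : `|v - w| < e / (`|u| + 1).
  near: w; exact: cvgr_dist_lt.
rewrite -ipB1 //; apply: (le_lt_trans (ip_abs hip _ _)).
rewrite ltr_pdivlMr ?ltr_wpDl // in hw.
apply: le_lt_trans hw; rewrite ler_wpM2l ?lerDl //.
Unshelve. all: by end_near. Qed.

Lemma ip_derive (hip : is_inner_product ip) (f : R -> H) t df u :
  is_derive t (1:R) f df -> is_derive t (1:R) (fun s => ip (f s) u) (ip df u).
Proof.
move=> hd.
have key : (fun h : R => h^-1 *: (((fun s => ip (f s) u) \o shift t) (h *: 1) - ip (f t) u))
  = (fun v => ip v u) \o (fun h : R => h^-1 *: ((f \o shift t) (h *: 1) - f t)).
  by apply/funext => h /=; rewrite ipZ1 // ipB1.
have cv : (fun h : R => h^-1 *: ((f \o shift t) (h *: 1) - f t)) @ 0^' --> df.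
  rewrite -(@derive_val _ _ _ _ _ _ _ hd); exact: (@ex_derive _ _ _ _ _ _ _ hd).
have cv2 := cvg_comp _ _ cv (ip_cont hip u df).
split; first by rewrite /derivable key; apply/cvg_ex; exists (ip df u).
by rewrite /derive key; apply: cvg_lim.
Qed.
End IP.

Lemma nincr_p (R : realType) (f df : R -> R) (p : R) :
  (forall t : R, p < t -> is_derive t (1:R) f (df t)) -> (forall t, p < t -> df t <= 0) ->
  forall s t : R, p < s -> s <= t -> f t <= f s.
Proof.
move=> hd hn s t ps st.
apply: (@ler0_derive1_nincr _ f s t) => //.
- move=> y; rewrite in_itv /= => /andP[sy _].
  by have := hd y (lt_trans ps sy) => -[].
- move=> y; rewrite in_itv /= => /andP[sy _].
  have hy := hd y (lt_trans ps sy).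
  by rewrite derive1E (@derive_val _ _ _ _ _ _ _ hy); apply: hn (lt_trans ps sy).
- apply: derivable_within_continuous => y; rewrite in_itv /= => /andP[sy _].
  by have := hd y (lt_le_trans ps sy) => -[].
Qed.

Arguments nincr_p {R f df p}.
Arguments ip_derive {R H ip} hip {f t df} u.
Arguments ip_le {R H ip} hip x y.
Arguments ipB1 {R H ip} hip x y z.
Arguments ipxx {R H ip} hip x.

Lemma vmvt (R : realType) (H : normedModType R) (ip : H -> H -> R)
  (hip : is_inner_product ip) (x v : R -> H) (G G' : R -> R) (p : R) :
  (forall t : R, p < t -> is_derive t (1:R) x (v t)) ->
  (forall t : R, p < t -> is_derive t (1:R) G (G' t)) ->
  (forall t : R, p < t -> `|v t| <= - G' t) ->
  forall a b : R, p < a -> a <= b -> `|x b - x a| <= G a - G b.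
Proof.
move=> hx hG hv a b pa ab.
have Gm : G b <= G a.
  have hh := nincr_p hG; apply: hh pa ab => t pt; have := hv t pt; have := normr_ge0 (v t); lra.
set u := x b - x a.
pose phi := (fun t => ip (x t) u) + `|u| *: G.
have hphi : forall t : R, p < t -> is_derive t (1:R) phi (ip (v t) u + `|u| *: G' t).
  move=> t pt; apply: is_deriveD; first exact: (ip_derive hip u (hx t pt)).
  by apply: is_deriveZ; apply: hG.
have := nincr_p hphi _ _ _ pa ab.
rewrite /phi /= => /(_ _) h.
have {h}h : ip (x b) u + `|u| * G b <= ip (x a) u + `|u| * G a.
  apply: h => t pt.
  have h1 := ip_le hip (v t) u.
  have h2 := hv t pt.
  rewrite /GRing.scale /=. have h3 := normr_ge0 u.
  nra.
have e : ip (x b) u - ip (x a) u = `|u| ^+ 2 by rewrite -ipB1 // ipxx.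
have n0 : 0 <= `|u| by [].
nra.
Qed.
Arguments vmvt {R H ip} hip {x v G G' p}.

Lemma cvg_from_G (R : realType) (H : completeNormedModType R) (ip : H -> H -> R)
  (hip : is_inner_product ip) (x v : R -> H) (G G' : R -> R) (p : R) :
  (forall t : R, p < t -> is_derive t (1:R) x (v t)) ->
  (forall t : R, p < t -> is_derive t (1:R) G (G' t)) ->
  (forall t : R, p < t -> `|v t| <= - G' t) ->
  (forall t : R, p < t -> 0 <= G t) ->
  exists l : H, x t @[t --> +oo] --> l.
Proof.
move=> hx hG hv G0.
pose S := [set y | exists2 t, p < t & G t = y].
have hS : has_inf S.
  split; first by exists (G (p + 1)), (p + 1) => //; rewrite ltrDl.
  by exists 0 => y [t pt <-]; apply: G0.
have Sl := ge_inf (proj2 hS).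
suff : cvg (x @ +oo) by move=> hc; exists (lim (x @ +oo)).
apply: cauchy_cvg; apply/cauchyP => e e0.
have [y [a pa <-] ya] := inf_adherent e0 hS.
exists (x a) => /=.
near=> t.
rewrite -ball_normE /= distrC.
have at_ : a <= t by near: t; apply: nbhs_pinfty_ge; rewrite num_real.
have h := vmvt hip hx hG hv a t pa at_.
have h2 : inf S <= G t by apply: Sl; exists t => //; apply: lt_le_trans at_.
lra.
Unshelve. all: by end_near. Qed.

Lemma ldiff (R : realType) (H : normedModType R) (ip : H -> H -> R)
  (hip : is_inner_product ip) (L : H -> R) (g : H -> H) (x : R -> H) (t : R) :
  is_gradient ip L g -> is_derive t (1:R) x (- g (x t)) ->
  is_derive t (1:R) (fun s => L (x s)) (- `|g (x t)| ^+ 2).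
Proof.
move=> hg hx.
have [dL dLv] := hg (x t).
have dx : differentiable x t by apply/derivable1_diffP; case: hx.
have dc : differentiable (L \o x) t by apply: differentiable_comp.
split; first by apply/derivable1_diffP.
rewrite (deriveE _ dc) diff_comp //= -(deriveE _ dx) (@derive_val _ _ _ _ _ _ _ hx).
rewrite dLv; case: (hip) => hs _ _ _; rewrite hs ipN1 // ipxx //.
Qed.

Lemma limit_zero (R : realType) (H : normedModType R) (L : H -> R) (g : H -> H)
  (x : R -> H) (l : H) (k : R) :
  x t @[t --> +oo] --> l -> {for l, continuous L} -> 0 < k ->
  (forall y, 0 <= L y) ->
  (forall t : R, 0 < t -> is_derive t (1:R) (fun s => L (x s)) (- `|g (x t)| ^+ 2)) ->
  (forall t : R, 0 < t -> 0 < L (x t) -> k * Num.sqrt (L (x t)) <= `|g (x t)|) ->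
  L l = 0.
Proof.
move=> xl cL k0 L0 hd hk.
set lam := L l.
have cv : (fun s => L (x s)) @ +oo --> lam := cvg_comp _ _ xl cL.
have mono : forall s t : R, 0 < s -> s <= t -> L (x t) <= L (x s).
  apply: (nincr_p hd) => t _; rewrite oppr_le0; exact: sqr_ge0.
have lb : forall t : R, 0 < t -> lam <= L (x t).
  move=> t t0; rewrite leNgt; apply/negP => hlt.
  have e0 : 0 < lam - L (x t) by rewrite subr_gt0.
  have cd : \forall s \near +oo, `|lam - L (x s)| < lam - L (x t) by apply: cvgr_dist_lt.
  near (pinfty_nbhs R) => s.
  have h1 : `|lam - L (x s)| < lam - L (x t) by near: s.
  have h2 : t <= s by near: s; apply: nbhs_pinfty_ge; rewrite num_real.
  have h3 := mono _ _ t0 h2.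
  have h4 := ler_norm (lam - L (x s)).
  lra.
have lam0 : 0 <= lam by apply: L0.
rewrite le0r in lam0; case/orP: lam0 => [/eqP // | lpos].
exfalso.
set K := k ^+ 2 * lam.
have K0 : 0 < K by rewrite mulr_gt0 // exprn_gt0.
pose h := (fun s => L (x s)) + K *: (@id R).
have hh : forall t : R, 0 < t -> is_derive t (1:R) h (- `|g (x t)| ^+ 2 + K *: (1:R)).
  move=> t t0; apply: is_deriveD; first exact: hd.
have hn : forall t : R, 0 < t -> - `|g (x t)| ^+ 2 + K *: (1:R) <= 0.
  move=> t t0.
  have lt := lb t t0.
  have Lp : 0 < L (x t) by apply: lt_le_trans lt.
  have := hk t t0 Lp.
  have sq := sqr_sqrtr (ltW Lp).
  have sl : Num.sqrt lam <= Num.sqrt (L (x t)) by rewrite ler_sqrt.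
  have sq2 := sqr_sqrtr (ltW lpos).
  have s0 := sqrtr_ge0 lam.
  rewrite /GRing.scale /= /K mulr1 => hk1.
  have a1 : k * Num.sqrt lam <= `|g (x t)| by apply: le_trans hk1; rewrite ler_pM2l.
  have a0 : 0 <= k * Num.sqrt lam by rewrite mulr_ge0 // ltW.
  have : (k * Num.sqrt lam) ^+ 2 <= `|g (x t)| ^+ 2 by rewrite lerXn2r ?nnegrE.
  rewrite exprMn sq2; lra.
set T := 1 + L (x 1) / K.
have T1 : 1 <= T by rewrite lerDl divr_ge0 // ltW.
have := nincr_p hh hn 1 T ltr01 T1.
rewrite /h /= /GRing.scale /=.
have eT : K * T = K + L (x 1) by rewrite /T; field; rewrite gt_eqF.
have := lb T (lt_le_trans ltr01 T1).
move=> lT; rewrite /= => hT. have hT2 : L (x T) + K * T <= L (x 1) + K * 1 by exact: hT. lra.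
Unshelve. all: by end_near. Qed.

Theorem proposition2p3 (R : realType) (H : completeNormedModType R)
  (ip : H -> H -> R) (L : H -> R) (gradL : H -> H) (c : R -> R) (x : R -> H) :
  is_inner_product ip ->
  (forall y, 0 <= L y) ->
  is_gradient ip L gradL -> C1_map gradL ->
  (forall r, 0 <= r -> 0 <= c r) ->
  (forall r s, 0 <= r -> r <= s -> c s <= c r) ->
  (forall r, 0 <= r -> forall y, `|y| <= r -> 0 < L y ->
     c r <= `|gradL y| / Num.sqrt (L y)) ->
  (forall r, 0 < r -> 0 < c r) ->
  (forall t : R, 0 < t -> is_derive t (1 : R) x (- gradL (x t))) ->
  x t @[t --> (0:R)^'+] --> x 0 ->
  (exists M : R, forall t, 0 <= t -> `|x t| <= M) ->
  exists xinf : H, x t @[t --> (+oo : set_system R)] --> xinf /\ L xinf = 0.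
Proof.
move=> hip L0 hg _ _ _ hcb hcp hx _ [M hM].
have M0 : 0 <= M by apply: le_trans (hM 0 (lexx 0)).
set k := c (M + 1).
have k0 : 0 < k by apply: hcp; rewrite ltr_wpDl.
have hd : forall t : R, 0 < t -> is_derive t (1:R) (fun s => L (x s)) (- `|gradL (x t)| ^+ 2).
  by move=> t t0; exact: (@ldiff _ _ _ hip _ _ _ _ hg (hx t t0)).
have hk : forall t : R, 0 < t -> 0 < L (x t) -> k * Num.sqrt (L (x t)) <= `|gradL (x t)|.
  move=> t t0 Lp.
  have := hcb (M + 1) (addr_ge0 M0 ler01) (x t) _ Lp.
  have sp : 0 < Num.sqrt (L (x t)) by rewrite sqrtr_gt0.
  rewrite ler_pdivlMr // => h; apply: h.
  by apply: le_trans (hM t (ltW t0)) _; rewrite lerDl.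
suff [l xl] : exists l : H, x t @[t --> +oo] --> l.
  exists l; split => //.
  apply: (@limit_zero _ _ L gradL x l k xl _ k0 L0 hd hk).
  by apply: differentiable_continuous; case: (hg l).
have [[t0 [t0p l0]] | hpos] := pselect (exists t0 : R, 0 < t0 /\ L (x t0) = 0).
- have mono : forall s t : R, 0 < s -> s <= t -> L (x t) <= L (x s).
    apply: (nincr_p hd) => t _; rewrite oppr_le0; exact: sqr_ge0.
  have z : forall t, t0 <= t -> L (x t) = 0.
    move=> t htt; apply/eqP; rewrite eq_le L0 andbT -l0; exact: mono.
  have g0 : forall t, t0 < t -> gradL (x t) = 0.
    move=> t htt.
    have hd0 : is_derive t (1:R) (fun s => L (x s)) 0.
      have hdv : forall s, s \in `]t0, t + 1[ -> derivable (fun s => L (x s)) s 1.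
        move=> s; rewrite in_itv /= => /andP[ts _].
        by have := hd s (lt_trans t0p ts) => -[].
      have tin : t \in `]t0, t + 1[ by rewrite in_itv /= htt ltrDl ltr01.
      have tmin : forall s, s \in `]t0, t + 1[ -> L (x t) <= L (x s).
        move=> s; rewrite in_itv /= => /andP[ts _].
        by rewrite z ?L0 // ltW.
      exact: (@derive1_at_min _ _ t0 (t + 1) t (ler_wpDr ler01 (ltW htt)) hdv tin tmin).
    have e1 := @derive_val _ _ _ _ _ _ _ hd0.
    have e2 := @derive_val _ _ _ _ _ _ _ (hd t (lt_trans t0p htt)).
    rewrite e1 in e2.
    apply/normr0_eq0; apply/eqP; rewrite -sqrf_eq0.
    by rewrite -oppr_eq0 -e2.
  apply: (@cvg_from_G _ _ ip hip x (fun t => - gradL (x t)) (cst 0) (fun _ => 0) t0).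
  - by move=> t htt; apply: hx; apply: lt_trans htt.
  - by move=> t htt; rewrite g0 // oppr0 normr0 oppr0.
  - by [].
- have Lp : forall t : R, 0 < t -> 0 < L (x t).
    move=> t t0; rewrite lt_neqAle L0 andbT eq_sym; apply/eqP => e.
    by apply: hpos; exists t.
  pose G := (2 / k) \*: (Num.sqrt \o (fun s => L (x s))).
  pose G' := fun t : R => (2 / k) *: ((2 * Num.sqrt (L (x t)))^-1 * (- `|gradL (x t)| ^+ 2)).
  apply: (@cvg_from_G _ _ ip hip x (fun t => - gradL (x t)) G G' 0).
  - move=> t t0; rewrite /G /G'; apply: is_deriveZ.
    apply: is_derive1_comp; last exact: hd.
    exact: is_derive1_sqrt (Lp t t0).
  - move=> t t0; rewrite normrN /G'.
    have sp : 0 < Num.sqrt (L (x t)) by rewrite sqrtr_gt0 Lp.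
    have e : - (2 / k *: ((2 * Num.sqrt (L (x t)))^-1 * - `|gradL (x t)| ^+ 2))
      = `|gradL (x t)| ^+ 2 / (k * Num.sqrt (L (x t))).
      rewrite /GRing.scale /=; field.
      by rewrite !gt_eqF.
    rewrite e ler_pdivlMr ?mulr_gt0 //.
    have := hk t t0 (Lp t t0); have := normr_ge0 (gradL (x t)); nra.
  - move=> t _; rewrite /G /=.
    by rewrite mulr_ge0 ?sqrtr_ge0 // divr_ge0 // ltW.
Qed.
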